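(* Let $g\in\mathcal{G}$ be slow-jumping and slow-dropping. There exists a sub-polynomial function $h$ such that for every $\lambda>0$, every stream $D\in\mathcal{D}(n,m)$ with frequencies $v_1,\dots,v_n$, and every $i\in[n]$: if $g(|v_i|)\ge \lambda\sum_{j=1}^n g(|v_j|)$, then $v_i^2\ge \frac{\lambda}{h(|v_i|)}\sum_{j:|v_j|<|v_i|} v_j^2$.
   Context: Streams: a stream of length $m$ with domain $[n]$ is a list $\langle (i_1,\delta_1),\dots,(i_m,\delta_m)\rangle$ with $i_j\in[n]$, $\delta_j\in\mathbb{Z}$; its frequencies are $v_i=\sum_{j:i_j=i}\delta_j$. $\mathcal{D}(n,m)$ is the set of turnstile streams with domain $[n]$ and length at most $m$ (there is $M$ with all prefix frequency vectors in $\{-M,\dots,M\}^n$). $\mathcal{G}=\{g:\mathbb{Z}_{\ge0}\to\mathbb{R}: g(0)=0,\ g(1)=1,\ g(x)>0\ \forall x>0\}$. A function $f:\mathbb{R}_{\ge0}\to\mathbb{R}_{\ge0}$ is sub-polynomial if for every $\alpha>0$, $\lim_{x\to\infty}x^\alpha f(x)=\infty$ and $\lim_{x\to\infty}x^{-\alpha}f(x)=0$. $g$ is slow-jumping if for every $\alpha>0$ there is $N>0$ such that for all positive integers $x<y$ with $y\ge N$, $g(y)\le \lfloor y/x\rfloor^{2+\alpha}x^\alpha g(x)$. $g$ is slow-dropping if for every $\alpha>0$ there is $N>0$ such that for all $x<y$ with $y\ge N$, $g(y)\ge g(x)/y^\alpha$. *)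

(* Defs.v *)
From HB Require Import structures.
From mathcomp Require Import all_boot all_order all_algebra.
From mathcomp Require Import all_classical all_reals all_analysis.
Set Implicit Arguments. Unset Strict Implicit. Unset Printing Implicit Defensive.
Import Order.TTheory GRing.Theory Num.Theory.
Import numFieldNormedType.Exports.
Local Open Scope classical_set_scope.
Local Open Scope ring_scope.

(* A turnstile stream with domain [n] (indexed 0..n-1 via 'I_n): a list of
   updates (i_j, delta_j). *)
Definition stream (n : nat) := seq ('I_n * int).

(* D(n,m): streams with domain [n] and length at most m.  (The bound M on
   prefix frequencies always exists for a finite stream.) *)
Definition in_D (n m : nat) (D : stream n) : Prop := (size D <= m)%N.

Definition freq (n : nat) (D : stream n) (i : 'I_n) : int :=
  \sum_(p <- D | p.1 == i) p.2.

Definition in_G (R : realType) (g : nat -> R) : Prop :=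
  g 0%N = 0 /\ g 1%N = 1 /\ (forall x : nat, (0 < x)%N -> 0 < g x).

Definition slow_jumping (R : realType) (g : nat -> R) : Prop :=
  forall alpha : R, 0 < alpha -> exists N : nat, (0 < N)%N /\
    forall x y : nat, (0 < x)%N -> (x < y)%N -> (N <= y)%N ->
      g y <= ((y %/ x)%:R `^ (2 + alpha)) * (x%:R `^ alpha) * g x.

Definition slow_dropping (R : realType) (g : nat -> R) : Prop :=
  forall alpha : R, 0 < alpha -> exists N : nat, (0 < N)%N /\
    forall x y : nat, (x < y)%N -> (N <= y)%N ->
      g x / (y%:R `^ alpha) <= g y.

(* sub-polynomial f : R>=0 -> R>=0 (represented as R -> R, nonnegative on R>=0) *)
Definition sub_polynomial (R : realType) (f : R -> R) : Prop :=
  (forall x : R, 0 <= x -> 0 <= f x) /\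
  forall alpha : R, 0 < alpha ->
    (x `^ alpha * f x @[x --> +oo] --> +oo) /\
    (x `^ (- alpha) * f x @[x --> +oo] --> 0).

(* Main.v *)
Require Import Defs.
From HB Require Import structures.
From mathcomp Require Import all_boot all_order all_algebra.
From mathcomp Require Import all_classical all_reals all_analysis.
From mathcomp Require Import lra ring.
Import Order.TTheory GRing.Theory Num.Theory.
Local Open Scope ring_scope.

Section T.
Variable R : realType.

Lemma powR_large (b : R) : 0 < b -> forall A : R, \forall x \near +oo, A <= x `^ b.
Proof.
move=> bp A.
have M1 : 0 <= Num.max A 1 by rewrite le_max ler01 orbT.
near=> x.
have hx : (Num.max A 1) `^ b^-1 <= x by near: x; apply: nbhs_pinfty_ge; apply: num_real.
have x0 : 0 <= x by apply: le_trans hx; apply: powR_ge0.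
apply: (@le_trans _ _ (Num.max A 1)); first by rewrite le_max lexx.
have -> : Num.max A 1 = ((Num.max A 1) `^ b^-1) `^ b.
  by rewrite -powRrM mulVf ?gt_eqF // powRr1.
by apply: ge0_ler_powR => //; rewrite ?nnegrE ?powR_ge0 // ltW.
Unshelve. all: by end_near.
Qed.

Lemma two_powR (a : R) : 0 <= a -> a `^ 2 = a ^+ 2.
Proof. move=> a0; exact: (powR_mulrn 2 a0). Qed.
End T.

Section S.
Variables (R : realType) (g : nat -> R).

Definition term (a b : nat) : R := (b%:R ^+ 2 * g a) / (a%:R ^+ 2 * g b).

Fixpoint Hr (a n : nat) : R :=
  match n with 0 => 1 | n'.+1 => Num.max (Hr a n') (term a n') end.

Definition H a := Hr a a.

Lemma Hr_ge1 a n : 1 <= Hr a n.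
Proof. elim: n => [|n IH] //=; by rewrite le_max IH. Qed.

Lemma term_le_Hr a n b : (b < n)%N -> term a b <= Hr a n.
Proof.
elim: n => [//|n IH] /=; rewrite ltnS leq_eqVlt => /orP [/eqP -> | /IH Hb].
  by rewrite le_max lexx orbT.
by rewrite le_max Hb.
Qed.

Lemma Hr_le a n B : 1 <= B -> (forall b, (b < n)%N -> term a b <= B) -> Hr a n <= B.
Proof.
move=> B1; elim: n => [//|n IH] hb /=.
rewrite ge_max IH ?hb //. by move=> b lt; apply: hb; apply: ltnW.
Qed.

Hypothesis gG : in_G g.

Lemma g_ge0 b : 0 <= g b.
Proof. case: gG => g0 [_ gp]; case: b => [|b]; first by rewrite g0. by apply/ltW/gp. Qed.

Lemma key a b : (b < a)%N -> b%:R ^+ 2 * g a <= H a * a%:R ^+ 2 * g b.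
Proof.
move=> ba; case: gG => g0 [_ gp].
case: b ba => [|b] ba.
  by rewrite g0 expr0n /= mul0r mulr0.
have hpos : 0 < a%:R ^+ 2 * g b.+1 :> R.
  apply: mulr_gt0; last exact: gp.
  by rewrite exprn_gt0 // ltr0n; apply: leq_ltn_trans ba.
have := @term_le_Hr a a _ ba; rewrite /term ler_pdivrMr // => HH.
by rewrite /H -mulrA.
Qed.

Lemma sq_abs (z : int) : (z%:~R : R) ^+ 2 = (`|z|%N)%:R ^+ 2.
Proof. by rewrite natr_absz intr_norm real_normK // num_real. Qed.

Lemma main_ineq (lambda : R) n (D : stream n) (i : 'I_n) : 0 < lambda ->
  g `|freq D i|%N >= lambda * \sum_(j < n) g `|freq D j|%N ->
  ((freq D i)%:~R : R) ^+ 2 >=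
    lambda / H `|freq D i|%N *
    \sum_(j < n | (`|freq D j| < `|freq D i|)%N) ((freq D j)%:~R : R) ^+ 2.
Proof.
move=> lp hS.
under eq_bigr => j _ do rewrite sq_abs.
rewrite sq_abs.
move: hS; set a := `|freq D i|%N => hS.
case: a hS => [|a] hS.
  by rewrite big1 ?mulr0 ?sqr_ge0 // => j; rewrite ltn0.
case: gG => g0 [_ gp].
have ga : 0 < g a.+1 by apply: gp.
have Hp : 0 < H a.+1 by apply: lt_le_trans (Hr_ge1 _ _).
set T := \sum_(j < n | _) _.
set S := \sum_(j < n) _ in hS.
have hT : g a.+1 * T <= H a.+1 * a.+1%:R ^+ 2 * S.
  rewrite /T mulr_sumr.
  apply: (@le_trans _ _ (\sum_(j < n | (`|freq D j| < a.+1)%N) H a.+1 * a.+1%:R ^+ 2 * g `|freq D j|%N)).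
    by apply: ler_sum => j hj; rewrite mulrC; apply: key.
  rewrite -mulr_sumr; apply: ler_wpM2l.
    by apply: mulr_ge0; [apply: ltW | apply: sqr_ge0].
  rewrite /S [X in _ <= X](bigID (fun j : 'I_n => (`|freq D j| < a.+1)%N)) /=.
  by rewrite lerDl; apply: sumr_ge0 => j _; apply: g_ge0.
rewrite mulrAC ler_pdivrMr // -(ler_pM2l ga).
have h1 := ler_wpM2l (ltW lp) hT.
have h2 : 0 <= H a.+1 * a.+1%:R ^+ 2 by apply: mulr_ge0; [apply: ltW | apply: sqr_ge0].
have h3 := ler_wpM2l h2 hS.
nra.
Qed.

Lemma term_bound (beta : R) (N a b : nat) : 0 < beta ->
  (forall x y : nat, (0 < x)%N -> (x < y)%N -> (N <= y)%N ->
      g y <= ((y %/ x)%:R `^ (2 + beta)) * (x%:R `^ beta) * g x) ->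
  (0 < b)%N -> (b < a)%N -> (N <= a)%N -> term a b <= a%:R `^ beta.
Proof.
move=> bp SJ b0 ba Na.
case: gG => g0 [_ gp].
have a0 : (0 < a)%N by apply: leq_trans ba.
have gb : 0 < g b by apply: gp.
have ar : 0 < a%:R :> R by rewrite ltr0n.
have br : 0 < b%:R :> R by rewrite ltr0n.
have hpos : 0 < a%:R ^+ 2 * g b :> R by apply: mulr_gt0 => //; apply: exprn_gt0.
rewrite /term ler_pdivrMr //.
have hq : (a %/ b)%:R <= a%:R / b%:R :> R.
  by rewrite ler_pdivlMr // -natrM ler_nat leq_trunc_div.
have hq0 : 0 <= (a %/ b)%:R :> R by [].
have adb0 : 0 < a%:R / b%:R :> R by apply: divr_gt0.
have P1 : (a %/ b)%:R `^ (2 + beta) <= (a%:R / b%:R) `^ (2 + beta).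
  by apply: ge0_ler_powR; rewrite ?nnegrE ?addr_ge0 ?(ltW bp) ?(ltW adb0).

have E1 : (a%:R / b%:R) `^ (2 + beta) * b%:R `^ beta = (a%:R / b%:R) ^+ 2 * a%:R `^ beta.
  rewrite powRD; last by apply/implyP => _; rewrite gt_eqF.
  rewrite two_powR; last exact: ltW.
  rewrite -mulrA -powRM; [|exact: ltW|exact: ltW].
  by rewrite divfK // gt_eqF.
have hg := SJ b a b0 ba Na.
have hb2 : 0 <= b%:R `^ beta :> R by apply: powR_ge0.
have : g a <= (a%:R / b%:R) ^+ 2 * a%:R `^ beta * g b.
  apply: le_trans hg _; rewrite -E1; apply: ler_wpM2r; first exact: ltW.
  by apply: ler_wpM2r.
move=> hga.
have E2 : b%:R ^+ 2 * ((a%:R / b%:R) ^+ 2) = a%:R ^+ 2 :> R.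
  by rewrite expr_div_n mulrC divfK // expf_neq0 // gt_eqF.
apply: le_trans (_ : b%:R ^+ 2 * ((a%:R / b%:R) ^+ 2 * a%:R `^ beta * g b) <= _).
  by apply: ler_wpM2l => //; apply: sqr_ge0.
by rewrite -E2 le_eqVlt; apply/orP; left; apply/eqP; ring.
Qed.

End S.

Theorem lemma17 (R : realType) (g : nat -> R) :
  in_G g -> slow_jumping g -> slow_dropping g ->
  exists h : R -> R, sub_polynomial h /\ (forall x : R, 0 <= x -> 0 < h x) /\
    forall (lambda : R), 0 < lambda ->
    forall (n m : nat) (D : stream n), in_D m D ->
    forall i : 'I_n,
      g `|freq D i|%N >= lambda * \sum_(j < n) g `|freq D j|%N ->
      ((freq D i)%:~R : R) ^+ 2 >=
        lambda / h (`|freq D i|%N)%:R *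
        \sum_(j < n | (`|freq D j| < `|freq D i|)%N) ((freq D j)%:~R : R) ^+ 2.
Proof.
move=> gG SJ _.
have tn : forall k : nat, Num.truncn (k%:R : R) = k.
  by move=> k; apply: truncn_def; rewrite lexx ltr_nat ltnSn.
exists (fun x => H R g (Num.truncn x)).
split; [split|split].
- by move=> x _; apply: le_trans (Hr_ge1 R g _ _); apply: ler01.
- move=> alpha ap; split.
  + apply/cvgryPge => A.
    have := @powR_large R _ ap A; apply: filterS => x hx.
    apply: le_trans hx _.
    rewrite -{1}(mulr1 (x `^ alpha)); apply: ler_wpM2l; first exact: powR_ge0.
    exact: (Hr_ge1 R g).
  + apply/cvgr0Pnorm_le => eps ep.
    have bp : 0 < alpha / 2 by apply: divr_gt0.
    have [N [N0 HN]] := SJ (alpha / 2) bp.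
    near=> x.
    have xN : N%:R <= x by near: x; apply: nbhs_pinfty_ge; apply: num_real.
    have x1 : 1 <= x by near: x; apply: nbhs_pinfty_ge; apply: num_real.
    have xe : eps^-1 <= x `^ (alpha / 2) by near: x; apply: (@powR_large R).
    have x0 : 0 <= x by apply: le_trans x1; apply: ler01.
    set s := x `^ (alpha / 2).
    have s1 : 1 <= s.
      apply: (@le_trans _ _ (1 `^ (alpha/2))); first by rewrite powR1.
      rewrite /s; apply: ge0_ler_powR; rewrite ?nnegrE //.
        exact: ltW.
      idtac.
    have s0 : 0 < s by apply: lt_le_trans s1; apply: ltr01.
    have hs : H R g (Num.truncn x) <= s.
      apply: (@Hr_le R g) => // b.
      case: b => [|b] ba.
        by rewrite /term expr0n /= !mul0r; apply: ltW.
      have Na : (N <= Num.truncn x)%N by rewrite truncn_ge_nat.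
      apply: le_trans (@term_bound R g gG _ _ _ _ bp HN _ ba Na) _ => //.
      apply: ge0_ler_powR; rewrite ?nnegrE //; first exact: ltW.
      by rewrite truncn_le.
    have hx0 : 0 <= H R g (Num.truncn x) by apply: le_trans (Hr_ge1 R g _ _); apply: ler01.
    have ea : x `^ (- alpha) = (s * s)^-1.
      rewrite powRN /s -powRD; last by apply/implyP => _; rewrite gt_eqF // (lt_le_trans ltr01 x1).
      by rewrite -splitr.
    rewrite ea ger0_norm; last by apply: mulr_ge0 => //; rewrite invr_ge0; apply: mulr_ge0; apply: ltW.
    apply: (@le_trans _ _ ((s * s)^-1 * s)).
      by apply: ler_wpM2l => //; rewrite invr_ge0; apply: mulr_ge0; apply: ltW.
    rewrite invfM -mulrA mulVf ?gt_eqF // mulr1.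
    rewrite -(invrK eps) lef_pV2 ?posrE ?invr_gt0 //.
- by move=> x _; apply: lt_le_trans (Hr_ge1 R g _ _); apply: ltr01.
- move=> lambda lp n m D _ i hS.
  rewrite tn; exact: (@main_ineq R g gG).
Unshelve. all: by end_near.
Qed.
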